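(* For every integer $r$ there exists an integer $k=k(r)$ such that the following holds. If $G$ is a graph whose neighborhood complexity satisfies $\eta_G(m)\le r\cdot m$ for every positive integer $m$, then the vertices of $G$ can be (not necessarily properly) colored with $k$ colors such that for every non-isolated vertex $v$ of $G$ there exists a color which appears on an odd number of vertices of the open neighborhood $N(v)$.
   Context: All graphs are finite and simple. $N(v)$ denotes the open neighborhood of $v$ (not containing $v$). The neighborhood complexity of a graph $G$ is the function $\eta_G(m)=\max_{A}|\{N(v)\cap A : v\in V(G)\}|$, where the maximum is over all $m$-element subsets $A\subseteq V(G)$. *)

(* Defs.v *)
From mathcomp Require Import all_boot.
Set Implicit Arguments. Unset Strict Implicit. Unset Printing Implicit Defensive.

(* A finite simple graph: vertex type T : finType, adjacency e : rel T,
   assumed symmetric and irreflexive in the theorem statement. *)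

Definition nbhd (T : finType) (e : rel T) (v : T) : {set T} := [set u | e v u].

(* Neighborhood complexity eta_G(m) = max over m-element A of
   |{ N(v) ∩ A : v ∈ V(G) }|  (0 if no m-element subset exists). *)
Definition nbhd_complexity (T : finType) (e : rel T) (m : nat) : nat :=
  \max_(A : {set T} | #|A| == m) #|[set (nbhd e v :&: A) | v : T]|.

(* Main.v *)
Require Import Defs.
From mathcomp Require Import all_boot.
From mathcomp Require Import zify.
Set Implicit Arguments. Unset Strict Implicit. Unset Printing Implicit Defensive.


Section Edge.
Variable T : finType.
Implicit Types (I J K X Y : {set T}) (G : {set {set T}}).

Definition shatters G J := forall K, K \subset J -> exists2 X, X \in G & X :&: J = K.

Definition edgx x G := #|[set X in G | (x \notin X) && (x |: X \in G)]|.
Definition edg I G := \sum_(x in I) edgx x G.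

Lemma card_split x G :
  #|G| = #|[set X :\ x | X in G]| + #|[set X in G | (x \notin X) && (x |: X \in G)]|.
Proof.
set G0 := [set X in G | x \notin X].
set G1 := [set X in G | x \in X].
have HG : G = G0 :|: G1.
  apply/setP=> X; rewrite !inE; by case: (X \in G); case: (x \in X).
have HD : G0 :&: G1 = set0.
  apply/setP=> X; rewrite !inE; by case: (X \in G); case: (x \in X).
have HG' : [set X :\ x | X in G] = G0 :|: [set X :\ x | X in G1].
  apply/setP=> Y; apply/imsetP/setUP.
  - case=> X XG ->. case xX: (x \in X).
    + by right; apply/imsetP; exists X => //; rewrite inE XG xX.
    + left. have -> : X :\ x = X.
        by apply/setP=> z; rewrite !inE; case: eqP => // ->; rewrite xX.
      by rewrite inE XG xX.
  - case.
    + rewrite inE => /andP[YG xY]; exists Y => //.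
      by apply/setP=> z; rewrite !inE; case: eqP => // ->; rewrite (negbTE xY).
    + case/imsetP=> X; rewrite inE => /andP[XG _] ->; by exists X.
have Hinj : {in G1 &, injective (fun X => X :\ x)}.
  move=> X Y; rewrite !inE => /andP[_ xX] /andP[_ xY] E.
  by rewrite -(setD1K xX) -(setD1K xY) E.
have HI : G0 :&: [set X :\ x | X in G1] = [set X in G | (x \notin X) && (x |: X \in G)].
  apply/setP=> Y; rewrite !inE; apply/andP/idP.
  - case=> /andP[YG xY] /imsetP[X]; rewrite inE => /andP[XG xX] EY.
    by rewrite YG xY EY setD1K.
  - case/andP=> YG /andP[xY xYG]; split; first by rewrite YG.
    apply/imsetP; exists (x |: Y); first by rewrite inE xYG setU11.
    apply/setP=> z; rewrite !inE; case: eqP => // ->; by rewrite (negbTE xY).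
rewrite -HI HG' cardsU (card_in_imset Hinj) HG (cardsU G0 G1).
rewrite HD cards0 subn0.
have : #|G0 :&: [set X :\ x | X in G1]| <= #|[set X :\ x | X in G1]|.
  by apply: subset_leq_card; apply: subsetIr.
rewrite (card_in_imset Hinj). have : #|G0 :&: [set X :\ x | X in G1]| <= #|G0| by apply: subset_leq_card; apply: subsetIl.
move=> h1 _; rewrite subnK //; exact: leq_trans h1 (leq_addr _ _).
Qed.


Lemma setD1_notin x X : x \notin X -> X :\ x = X.
Proof. move=> xX; apply/setP=> z; rewrite !inE; case: eqP => // ->; by rewrite (negbTE xX). Qed.

Lemma edgx_split x y G : y != x ->
  edgx y G <= edgx y [set X :\ x | X in G] +
              edgx y [set X in G | (x \notin X) && (x |: X \in G)].
Proof.
move=> yx.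
set G' := [set X :\ x | X in G].
set Gx := [set X in G | (x \notin X) && (x |: X \in G)].
rewrite /edgx.
set E := [set X in G | (y \notin X) && (y |: X \in G)].
set E0 := [set X in E | x \notin X].
set E1 := [set X in E | x \in X].
have HE : #|E| = #|E0| + #|E1|.
  rewrite -(cardsID [set X : {set T} | x \in X] E); rewrite addnC; congr (_ + _).
  - apply: eq_card => X; rewrite !inE; case: (x \in X); rewrite /= ?andbT ?andbF //.
  - apply: eq_card => X; rewrite !inE; case: (x \in X); rewrite /= ?andbT ?andbF //.
have Hinj : {in E1 &, injective (fun X => X :\ x)}.
  move=> X Y; rewrite !inE => /andP[_ xX] /andP[_ xY] Ex.
  by rewrite -(setD1K xX) -(setD1K xY) Ex.
set E1' := [set X :\ x | X in E1].
have H1 : #|E1| = #|E1'| by rewrite (card_in_imset Hinj).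
have Hsub1 : E0 :|: E1' \subset [set X in G' | (y \notin X) && (y |: X \in G')].
  apply/subsetP=> Z; rewrite inE => /orP[].
  - rewrite !inE => /andP[/andP[ZG /andP[yZ yZG]] xZ].
    rewrite yZ /=; apply/andP; split.
    + by apply/imsetP; exists Z => //; rewrite setD1_notin.
    + apply/imsetP; exists (y |: Z) => //; rewrite setD1_notin //.
      by rewrite !inE negb_or xZ andbT eq_sym.
  - case/imsetP=> X; rewrite !inE => /andP[/andP[XG /andP[yX yXG]] xX] ->.
    rewrite !inE negb_and yX orbT /=; apply/andP; split.
    + by apply/imsetP; exists X.
    + apply/imsetP; exists (y |: X) => //; apply/setP=> z; rewrite !inE.
      case: (eqVneq z x) => [->|zx] //=; by rewrite eq_sym (negbTE yx).
have Hsub2 : E0 :&: E1' \subset [set X in Gx | (y \notin X) && (y |: X \in Gx)].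
  apply/subsetP=> Z; rewrite !inE => /andP[/andP[/andP[ZG /andP[yZ yZG]] xZ]].
  case/imsetP=> X; rewrite !inE => /andP[/andP[XG /andP[yX yXG]] xX] EZ.
  have XE : X = x |: Z by rewrite EZ setD1K.
  rewrite ZG xZ yZ /= -XE XG /= yZG /=.
  rewrite negb_or xZ andbT eq_sym yx /=.
  have -> : x |: (y |: Z) = y |: X by rewrite XE setUCA.
  exact: yXG.
rewrite HE H1 -(cardsUI E0 E1').
apply: leq_add; exact: subset_leq_card.
Qed.

Lemma shatters_proj x G J : shatters [set X :\ x | X in G] J -> shatters G J.
Proof.
move=> sh.
have xJ : x \notin J.
  case: (sh J (subxx J)) => X' /imsetP[X _ ->] E.
  apply/negP=> xJ; have : x \in (X :\ x) :&: J by rewrite E.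
  by rewrite !inE eqxx.
move=> K KJ; case: (sh K KJ) => X' /imsetP[X XG ->] E.
exists X => //; rewrite -E; apply/setP=> z; rewrite !inE.
case: (eqVneq z x) => [->|] //=; by rewrite (negbTE xJ) andbF.
Qed.

Lemma shatters_red x G J :
  shatters [set X in G | (x \notin X) && (x |: X \in G)] J ->
  x \notin J /\ shatters G (x |: J).
Proof.
move=> sh.
have xJ : x \notin J.
  case: (sh J (subxx J)) => X; rewrite inE => /andP[_ /andP[xX _]] E.
  apply/negP=> xJ; have : x \in X :&: J by rewrite E.
  by rewrite inE (negbTE xX).
split=> // K KJ.
case xK: (x \in K).
- have KJ' : K :\ x \subset J.
    apply/subsetP=> z; rewrite !inE => /andP[zx zK].
    by move/subsetP: KJ => /(_ z zK); rewrite !inE (negbTE zx).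
  case: (sh _ KJ') => X; rewrite inE => /andP[_ /andP[xX xXG]] E.
  exists (x |: X) => //.
  rewrite -(setD1K xK) -E; apply/setP=> z; rewrite !inE.
  by case: (z == x).
- have KJ' : K \subset J.
    apply/subsetP=> z zK; move/subsetP: KJ => /(_ z zK); rewrite !inE.
    case/orP=> // /eqP zx; by move: zK; rewrite zx xK.
  case: (sh _ KJ') => X; rewrite inE => /andP[XG /andP[xX _]] E.
  exists X => //; rewrite -E; apply/setP=> z; rewrite !inE.
  case: (eqVneq z x) => [->|] //=; by rewrite (negbTE xX).
Qed.

Lemma edge_bound n : forall I G d, #|I| <= n ->
  (forall X, X \in G -> X \subset I) ->
  (forall J, shatters G J -> #|J| <= d) -> edg I G <= d * #|G|.
Proof.
elim: n => [|n IH] I G d hI hG hsh.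
  have -> : I = set0 by apply/eqP; rewrite -cards_eq0; move: hI; case: #|I|.
  by rewrite /edg big_set0.
case: (set_0Vmem I) => [->|[x xI]]; first by rewrite /edg big_set0.
set I0 := I :\ x.
set G' := [set X :\ x | X in G].
set Gx := [set X in G | (x \notin X) && (x |: X \in G)].
have hI0 : #|I0| <= n by move: hI; rewrite /I0 (cardsD1 x I) xI; case: #|_|.
have hG' : forall X, X \in G' -> X \subset I0.
  move=> X' /imsetP[X XG ->]; apply/subsetP=> z; rewrite !inE => /andP[-> zX].
  by move/subsetP: (hG X XG) => /(_ z zX).
have hGx : forall X, X \in Gx -> X \subset I0.
  move=> X; rewrite inE => /andP[XG /andP[xX _]]; apply/subsetP=> z zX.
  rewrite !inE; move/subsetP: (hG X XG) => /(_ z zX) ->; rewrite andbT.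
  by apply/eqP=> zx; move: xX; rewrite -zx zX.
have sh' : forall J, shatters G' J -> #|J| <= d.
  by move=> J /shatters_proj; apply: hsh.
have shx : forall J, shatters Gx J -> #|J| <= d.-1.
  move=> J /shatters_red [xJ /hsh]; rewrite cardsU1 xJ; move=> h; rewrite -subn1; apply: leq_subRL_t || lia.
have dpos : 0 < #|Gx| -> 0 < d.
  case/card_gt0P=> X XGx; have : shatters Gx set0.
    move=> K; rewrite subset0 => /eqP ->; exists X => //; by rewrite setI0.
  by move/shatters_red=> [_ /hsh]; rewrite setU0 cards1.
have e1 := IH I0 G' d hI0 hG' sh'.
have e2 := IH I0 Gx d.-1 hI0 hGx shx.
have hsplit := card_split x G.
rewrite /edg (bigD1 x xI) /=.
have e3 : \sum_(y in I | y != x) edgx y G <= edg I0 G' + edg I0 Gx.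
  rewrite /edg -big_split /=.
  have -> : \sum_(y in I | y != x) edgx y G = \sum_(y in I0) edgx y G.
    by apply: eq_bigl => y; rewrite !inE andbC.
  apply: leq_sum => y; rewrite !inE => /andP[yx _]; exact: edgx_split.
have -> : edgx x G = #|Gx| by [].
rewrite hsplit -/G' -/Gx.
case: (posnP #|Gx|) => [gz|gp].
  rewrite gz add0n addn0; apply: leq_trans e3 _; rewrite -[d * _]addn0.
  apply: leq_add => //; by move: e2; rewrite gz muln0.
have := dpos gp; case: d e1 e2 {hsh sh' shx dpos} => // d e1 e2 _ /=.
have : #|Gx| + \sum_(y in I | y != x) edgx y G <= #|Gx| + (d.+1 * #|G'| + d * #|Gx|).
  by rewrite leq_add2l; apply: leq_trans e3 _; apply: leq_add.
move=> h; apply: leq_trans h _; set a := #|Gx|; set b := #|G'|; nia.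
Qed.
End Edge.


Lemma sum_bool_card (U : finType) (P : pred U) :
  \sum_(Y : U) (P Y : nat) = #|[set Y | P Y]|.
Proof.
rewrite -sum1_card [RHS](eq_bigl P); last by move=> Y; rewrite inE.
rewrite [RHS]big_mkcond /=; apply: eq_bigr => i _; by case: (P i).
Qed.

Lemma sum_ltn_ord N m : \sum_(t < N) (t < m : nat) = minn m N.
Proof.
elim: N => [|N IH]; first by rewrite big_ord0 minn0.
rewrite big_ord_recr /= IH.
case: (ltnP N m) => h.
- have -> : minn m N.+1 = N.+1 by apply/minn_idPr.
  by rewrite addn1.
- have -> : minn m N.+1 = m by apply/minn_idPl; exact: leqW h.
  by rewrite addn0.
Qed.

Lemma minn_sum N a b : a <= N -> b <= N ->
  minn a b = \sum_(t < N) ((t < a) && (t < b) : nat).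
Proof.
move=> ha hb.
have -> : \sum_(t < N) ((t < a) && (t < b) : nat) = \sum_(t < N) (t < minn a b : nat).
  by apply: eq_bigr => t _; rewrite leq_min.
rewrite sum_ltn_ord; apply/esym/minn_idPl; by rewrite geq_min ha.
Qed.

Section Pack.
Variable T : finType.
Variable F : {set {set T}}.
Implicit Types (I J K X Y : {set T}).

Definition wt I Y := #|[set X in F | X :&: I == Y]|.
Definition c1 I x Y := #|[set X in F | (X :&: I == Y) && (x \in X)]|.
Definition c0 I x Y := #|[set X in F | (X :&: I == Y) && (x \notin X)]|.
Definition W I x := \sum_(Y : {set T}) minn (c1 I x Y) (c0 I x Y).

Lemma sum_wt I : \sum_(Y : {set T}) wt I Y = #|F|.
Proof.
rewrite -sum1_card [RHS](partition_big (fun X => X :&: I) xpredT) //=.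
apply: eq_bigr => Y _; rewrite /wt -sum1_card; apply: eq_bigl => X; by rewrite inE.
Qed.

Lemma c0_wt I x Y : x \in I -> x \notin Y -> c0 (I :\ x) x Y = wt I Y.
Proof.
move=> xI xY; apply: eq_card => X; rewrite !inE; case: (X \in F) => //=.
apply/andP/eqP.
- case=> /eqP <- xX; apply/setP=> z; rewrite !inE.
  case: (eqVneq z x) => [->|] //=; by rewrite (negbTE xX) andbF.
- move=> E; have xX : x \notin X.
    by apply/negP=> xX; move: xY; rewrite -E inE xX xI.
  split=> //; apply/eqP; rewrite -E; apply/setP=> z; rewrite !inE.
  case: (eqVneq z x) => [->|] //=; by rewrite (negbTE xX) andbF.
Qed.

Lemma c1_wt I x Y : x \in I -> x \notin Y -> c1 (I :\ x) x Y = wt I (x |: Y).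
Proof.
move=> xI xY; apply: eq_card => X; rewrite !inE; case: (X \in F) => //=.
apply/andP/eqP.
- case=> /eqP <- xX; apply/setP=> z; rewrite !inE.
  case: (eqVneq z x) => [->|] //=; by rewrite xX xI.
- move=> E; have xX : x \in X.
    have : x \in X :&: I by rewrite E !inE eqxx.
    by rewrite inE => /andP[].
  split=> //; apply/eqP; rewrite -(setU1K xY) -E; apply/setP=> z; rewrite !inE.
  by case: (z \in X); case: (z != x).
Qed.

Lemma c1_0 I x Y : x \in Y -> c1 (I :\ x) x Y = 0.
Proof.
move=> xY; apply/eqP; rewrite cards_eq0; apply/eqP/setP=> X; rewrite !inE.
apply/negbTE/negP => /andP[_ /andP[/eqP E _]]; move: xY; rewrite -E !inE eqxx /=; by rewrite andbF.
Qed.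

Lemma c_le I x Y : (c1 I x Y <= #|F|) && (c0 I x Y <= #|F|).
Proof.
apply/andP; split; apply: subset_leq_card; apply/subsetP=> X; rewrite inE; by case/andP.
Qed.

Lemma shatters_sub (G : {set {set T}}) I J :
  (forall Y, Y \in G -> exists2 X, X \in F & X :&: I = Y) ->
  shatters G J -> shatters F J.
Proof.
move=> hG sh.
have JI : J \subset I.
  case: (sh J (subxx J)) => Y /hG [X XF <-] E.
  apply/subsetP=> z zJ; have : z \in X :&: I :&: J by rewrite E.
  by rewrite !inE => /andP[/andP[]].
move=> K KJ; case: (sh K KJ) => Y /hG [X XF <-] E.
exists X => //; rewrite -E; apply/setP=> z; rewrite !inE.
case zJ: (z \in J); rewrite ?andbF ?andbT //.
by move/subsetP: JI => /(_ z zJ) ->; rewrite andbT.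
Qed.

Lemma weighted_bound d I :
  (forall J, shatters F J -> #|J| <= d) ->
  \sum_(x in I) W (I :\ x) x <= d * #|F|.
Proof.
move=> hsh.
set N := #|F|.
pose Gt (t : nat) := [set Y | t < wt I Y].
have E1 : forall x, x \in I ->
    W (I :\ x) x = \sum_(t < N) edgx x (Gt t).
  move=> x xI; rewrite /W.
  have -> : \sum_(Y : {set T}) minn (c1 (I :\ x) x Y) (c0 (I :\ x) x Y) =
      \sum_(Y : {set T}) \sum_(t < N) ((t < c1 (I :\ x) x Y) && (t < c0 (I :\ x) x Y) : nat).
    apply: eq_bigr => Y _; case/andP: (c_le (I :\ x) x Y) => h1 h2; exact: minn_sum.
  rewrite exchange_big /=; apply: eq_bigr => t _.
  rewrite sum_bool_card /edgx; apply: eq_card => Y; rewrite !inE.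
  case xY: (x \in Y).
  - by rewrite (c1_0 _ xY) /= andbF.
  - rewrite (c0_wt xI (negbT xY)) (c1_wt xI (negbT xY)) /=; by rewrite andbC.
have E2 : \sum_(x in I) W (I :\ x) x = \sum_(t < N) edg I (Gt t).
  rewrite /edg (eq_bigr _ E1) exchange_big //=.
have E3 : forall t : 'I_N, edg I (Gt t) <= d * #|Gt t|.
  move=> t; apply: (@edge_bound _ #|I|) => //.
  - move=> Y; rewrite inE => /(leq_ltn_trans (leq0n _)) /card_gt0P [X]; rewrite inE => /andP[_ /eqP <-].
    exact: subsetIr.
  - move=> J sh; apply: hsh; apply: (shatters_sub (I := I)) sh.
    move=> Y; rewrite inE => /(leq_ltn_trans (leq0n _)) /card_gt0P [X]; rewrite inE => /andP[XF /eqP <-].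
    by exists X.
have E4 : \sum_(t < N) edg I (Gt t) <= \sum_(t < N) d * #|Gt t| by apply: leq_sum => t _; exact: E3 t.
rewrite E2; apply: leq_trans E4 _.
rewrite -big_distrr /= leq_mul2l; apply/orP; right.
have -> : \sum_(t < N) #|Gt t| = \sum_(Y : {set T}) minn (wt I Y) N.
  rewrite (eq_bigr (fun t : 'I_N => \sum_(Y : {set T}) (t < wt I Y : nat))); last first.
    by move=> t _; rewrite sum_bool_card.
  rewrite exchange_big /=; apply: eq_bigr => Y _; exact: sum_ltn_ord.
rewrite -[X in _ <= X](sum_wt I); apply: leq_sum => Y _; exact: geq_minl.
Qed.


Lemma card_sub_sum (U : finType) (A : {set U}) (P : pred U) :
  #|[set X in A | P X]| = \sum_(X in A) (P X : nat).
Proof.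
rewrite -sum1_card [RHS]big_mkcond [LHS]big_mkcond /=; apply: eq_bigr => X _.
by rewrite !inE; case: (X \in A); case: (P X).
Qed.

Lemma per_class (B : {set T}) Dd I Y :
  (forall X, X \in F -> X \subset B) ->
  (forall X Z, X \in F -> Z \in F -> X != Z -> Dd <= #|X :\: Z| + #|Z :\: X|) ->
  Dd * (wt I Y).-1 <= 2 * \sum_(x in B :\: I) minn (c1 I x Y) (c0 I x Y).
Proof.
move=> hB hD.
set Q := [set X in F | X :&: I == Y].
have hc1 : forall x, c1 I x Y = \sum_(X in Q) (x \in X : nat).
  move=> x; rewrite -card_sub_sum; apply: eq_card => X; rewrite !inE; by rewrite andbA.
have hc0 : forall x, c0 I x Y = \sum_(X in Q) (x \notin X : nat).
  move=> x; rewrite -card_sub_sum; apply: eq_card => X; rewrite !inE; by rewrite andbA.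
have hq : forall x, c1 I x Y + c0 I x Y = #|Q|.
  move=> x; rewrite hc1 hc0 -big_split /= -sum1_card; apply: eq_bigr => X _.
  by case: (x \in X).
have hA : forall x, c1 I x Y * c0 I x Y <= #|Q| * minn (c1 I x Y) (c0 I x Y).
  move=> x; rewrite -(hq x); case: (leqP (c1 I x Y) (c0 I x Y)) => h.
  - rewrite mulnC leq_mul2r; apply/orP; right; exact: leq_addl.
  - rewrite leq_mul2r; apply/orP; right; exact: leq_addr.
have hB2 : \sum_(x in B :\: I) c1 I x Y * c0 I x Y =
           \sum_(X in Q) \sum_(Z in Q) #|X :\: Z|.
  rewrite (eq_bigr (fun x => \sum_(X in Q) \sum_(Z in Q) ((x \in X) && (x \notin Z) : nat))); last first.
    move=> x _; rewrite hc1 hc0 big_distrl /=; apply: eq_bigr => X _.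
    rewrite big_distrr /=; apply: eq_bigr => Z _; by case: (x \in X); case: (x \in Z).
  rewrite exchange_big /=; apply: eq_bigr => X XQ; rewrite exchange_big /=.
  apply: eq_bigr => Z ZQ; rewrite -card_sub_sum; apply: eq_card => z; rewrite !inE.
  move: XQ ZQ; rewrite !inE => /andP[XF /eqP EX] /andP[ZF /eqP EZ].
  case zX: (z \in X); case zZ: (z \in Z); rewrite /= ?andbF //.
  have zB : z \in B by move/subsetP: (hB X XF) => /(_ z zX).
  rewrite zB andbT andbT; apply/negP=> zI.
  have : z \in X :&: I by rewrite inE zX zI.
  by rewrite EX -EZ inE zZ.
have hC : Dd * (#|Q| * (#|Q|).-1) <= 2 * \sum_(X in Q) \sum_(Z in Q) #|X :\: Z|.
  have -> : 2 * \sum_(X in Q) \sum_(Z in Q) #|X :\: Z| =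
            \sum_(X in Q) \sum_(Z in Q) (#|X :\: Z| + #|Z :\: X|).
    rewrite mul2n -addnn.
    have -> : \sum_(X in Q) \sum_(Z in Q) (#|X :\: Z| + #|Z :\: X|) =
      \sum_(X in Q) \sum_(Z in Q) #|X :\: Z| + \sum_(X in Q) \sum_(Z in Q) #|Z :\: X|.
      rewrite -big_split /=; apply: eq_bigr => X _; by rewrite big_split.
    congr (_ + _); by rewrite exchange_big.
  have -> : Dd * (#|Q| * (#|Q|).-1) = \sum_(X in Q) \sum_(Z in Q) ((X != Z) * Dd).
    have inner : forall X, X \in Q -> \sum_(Z in Q) ((X != Z) * Dd) = (#|Q|).-1 * Dd.
      move=> X XQ; rewrite -big_distrl /=; congr (_ * _).
      rewrite (bigD1 X XQ) /= eqxx add0n (cardsD1 X Q) XQ /= -sum1_card.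
      apply: eq_big => Z; first by rewrite in_setD1 andbC.
      by move=> /andP[_]; rewrite eq_sym => ->.
    rewrite (eq_bigr _ inner) sum_nat_const.
    set q := #|Q|; by rewrite mulnC -mulnA.
  apply: leq_sum => X XQ; apply: leq_sum => Z ZQ.
  case: (eqVneq X Z) => [_|ne]; first by rewrite mul0n.
  rewrite mul1n; apply: hD => //.
  - by move: XQ; rewrite inE => /andP[].
  - by move: ZQ; rewrite inE => /andP[].
have hq' : #|Q| = wt I Y by [].
rewrite -hq'.
case: (posnP #|Q|) => [->|qp]; first by rewrite muln0.
rewrite -(leq_pmul2l qp) mulnCA; apply: leq_trans hC _.
rewrite -hB2 mulnCA leq_mul2l /= big_distrr /=; apply: leq_sum => x _; exact: hA.
Qed.

Lemma lower_bound (B : {set T}) Dd I :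
  (forall X, X \in F -> X \subset B) ->
  (forall X Z, X \in F -> Z \in F -> X != Z -> Dd <= #|X :\: Z| + #|Z :\: X|) ->
  Dd * (#|F| - #|[set X :&: I | X in F]|) <= 2 * \sum_(x in B :\: I) W I x.
Proof.
move=> hB hD.
have -> : \sum_(x in B :\: I) W I x =
    \sum_(Y : {set T}) \sum_(x in B :\: I) minn (c1 I x Y) (c0 I x Y).
  by rewrite /W exchange_big.
rewrite big_distrr /=.
have E : \sum_(Y : {set T}) Dd * (wt I Y).-1 <= \sum_(Y : {set T}) 2 * \sum_(x in B :\: I) minn (c1 I x Y) (c0 I x Y).
  by apply: leq_sum => Y _; exact: per_class.
apply: leq_trans E.
rewrite -big_distrr /= leq_mul2l; apply/orP; right.
rewrite leq_subLR -{1}(sum_wt I).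
have -> : \sum_(Y : {set T}) wt I Y =
    \sum_(Y : {set T}) ((wt I Y).-1 + (0 < wt I Y : nat)).
  apply: eq_bigr => Y _; case: (wt I Y) => //= n; by rewrite addn1.
rewrite big_split /= addnC leq_add2r sum_bool_card.
apply: subset_leq_card; apply/subsetP=> Y; rewrite inE => /card_gt0P [X].
rewrite inE => /andP[XF /eqP <-]; by apply/imsetP; exists X.
Qed.

End Pack.


Lemma double_count (T : finType) (B : {set T}) s (g : {set T} -> T -> nat) :
 \sum_(I : {set T} | (I \subset B) && (#|I| == s.+1)) \sum_(x in I) g (I :\ x) x =
 \sum_(I : {set T} | (I \subset B) && (#|I| == s)) \sum_(x in B :\: I) g I x.
Proof.
rewrite !pair_big_dep /=.
rewrite (reindex_onto (fun p : {set T} * T => (p.2 |: p.1, p.2))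
                      (fun p : {set T} * T => (p.1 :\ p.2, p.2))) /=; last first.
  by case=> I x /= /andP[_ xI]; rewrite setD1K.
apply: eq_big => [[I x]|[I x]] /=.
- rewrite xpair_eqE eqxx andbT.
  case xI: (x \in I).
  + rewrite (_ : ((x |: I) :\ x == I) = false) ?andbF; last first.
      apply/negbTE/eqP=> E; move: xI; by rewrite -E !inE eqxx.
    by rewrite !inE xI andbF.
  + rewrite setU1K ?xI // eqxx andbT setU11 andbT !inE xI /=.
    rewrite cardsU1 xI add1n eqSS subUset sub1set.
    by case: (x \in B); case: (I \subset B); rewrite /= ?andbT ?andbF.
- by move=> /andP[_ /eqP [->]].
Qed.

Lemma exists_subset (T : finType) (B : {set T}) k : k <= #|B| ->
  exists2 I : {set T}, I \subset B & #|I| = k.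
Proof.
elim: k => [|k IH] hk; first by exists set0; [exact: sub0set | exact: cards0].
case: (IH (ltnW hk)) => I IB cI.
have : 0 < #|B :\: I| by rewrite cardsDS // cI subn_gt0.
case/card_gt0P=> x; rewrite inE => /andP[xI xB].
exists (x |: I); first by rewrite subUset sub1set xB.
by rewrite cardsU1 xI cI.
Qed.


Lemma packing (T : finType) (F : {set {set T}}) (B : {set T}) (r d Dd s : nat) :
  (forall X : {set T}, X \in F -> X \subset B) ->
  (forall I : {set T}, I \subset B -> #|[set X :&: I | X in F]| <= r * #|I| + 1) ->
  (forall J : {set T}, shatters F J -> #|J| <= d) ->
  (forall X Z : {set T}, X \in F -> Z \in F -> X != Z -> Dd <= #|X :\: Z| + #|Z :\: X|) ->
  s <= #|B| ->
  s.+1 * (Dd * (#|F| - (r * s + 1))) <= 2 * (#|B| - s) * (d * #|F|).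
Proof.
move=> hB htr hsh hD hs.
set P1 := fun I : {set T} => (I \subset B) && (#|I| == s.+1).
set P0 := fun I : {set T} => (I \subset B) && (#|I| == s).
set N1 := #|[set I | P1 I]|.
set N0 := #|[set I | P0 I]|.
have hU : \sum_(I | P1 I) \sum_(x in I) W F (I :\ x) x <= N1 * (d * #|F|).
  rewrite -sum_nat_cond_const; apply: leq_sum => I _; exact: weighted_bound.
have hL : N0 * (Dd * (#|F| - (r * s + 1))) <=
          2 * \sum_(I | P0 I) \sum_(x in B :\: I) W F I x.
  rewrite -sum_nat_cond_const big_distrr /=; apply: leq_sum => I /andP[IB /eqP cI].
  apply: leq_trans (lower_bound _ hB hD); rewrite leq_mul2l; apply/orP; right.
  apply: leq_sub2l; rewrite -cI; exact: htr.
have hUL := double_count B s (W F).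
have hN : N1 * s.+1 = N0 * (#|B| - s).
  have := double_count B s (fun _ _ => 1).
  rewrite (eq_bigr (fun _ => s.+1)); last first.
    by move=> I /andP[_ /eqP cI]; rewrite sum1_card cI.
  rewrite [in X in _ = X -> _](eq_bigr (fun _ => #|B| - s)); last first.
    by move=> I /andP[IB /eqP cI]; rewrite sum1_card cardsD (setIidPr IB) cI.
  by rewrite !sum_nat_cond_const.
have N0pos : 0 < N0.
  case: (exists_subset hs) => I IB cI; apply/card_gt0P; exists I.
  by rewrite inE /P0 IB cI eqxx.
rewrite -(leq_pmul2l N0pos).
apply: (@leq_trans (s.+1 * (2 * \sum_(I | P0 I) \sum_(x in B :\: I) W F I x))).
  by rewrite mulnCA leq_mul2l hL orbT.
rewrite -hUL.
apply: (@leq_trans (s.+1 * (2 * (N1 * (d * #|F|))))).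
  by rewrite !leq_mul2l hU !orbT.
set a := d * #|F|.
have -> : s.+1 * (2 * (N1 * a)) = 2 * (N1 * s.+1) * a by nia.
rewrite hN; nia.
Qed.




Lemma arith (r d m f : nat) : 0 < r -> 0 < d -> m <= r * f ->
  (((4*d*m) %/ (16*r*r*d)).+1 * (16*r*r*d * (f - (r*((4*d*m) %/ (16*r*r*d))+1)))
     <= 2 * (m - (4*d*m) %/ (16*r*r*d)) * (d * f)) -> m <= 4 * r.
Proof.
move=> r0 d0 hm.
case: (posnP m) => [->|m0]; first by [].
set D := 16*r*r*d.
set s := (4*d*m) %/ D.
move=> h.
have Dpos : 0 < D by rewrite /D; nia.
have h1 : s * D <= 4*d*m by rewrite /s leq_divM.
have h2 : 4*d*m < s.+1 * D by rewrite /s ltn_ceil.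
set g := f - (r*s+1).
have h3 : 4*d*m*g <= 2 * m * (d * f).
  apply: leq_trans (_ : s.+1 * (D * g) <= _).
    rewrite mulnA leq_mul2r; apply/orP; right; exact: ltnW.
  apply: leq_trans h _; apply: leq_mul => //; apply: leq_mul => //; exact: leq_subr.
have h4 : 2 * g <= f.
  have : (2*d*m) * (2*g) <= (2*d*m) * f.
    move: h3; clearbody g s D; nia.
  rewrite leq_pmul2l ; [done|nia].
have h5 : f <= 2 * (r * s) + 2 by move: h4; rewrite /g; lia.
have h6 : 4 * r * r * s <= m.
  have : d * (4 * (4 * r * r * s)) <= d * (4 * m).
    move: h1; rewrite /D; clearbody s; nia.
  by rewrite leq_pmul2l // leq_pmul2l.
clearbody s D g; nia.
Qed.


Lemma sq_le_pow j : 4 <= j -> j * j <= 2 ^ j.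
Proof.
elim: j => // j IH; rewrite leq_eqVlt => /orP[/eqP <- //|h].
have := IH h; rewrite expnS; nia.
Qed.

Lemma pow_bound r j : 2 ^ j <= r * j + 1 -> j <= r + 3.
Proof.
move=> h; case: (leqP j (r + 3)) => // hj.
have := sq_le_pow (_ : 4 <= j); nia.
Qed.

Section Graph.
Variable T : finType.
Variable e : rel T.
Hypothesis esym : symmetric e.
Variable r : nat.
Hypothesis heta : forall m, 0 < m -> nbhd_complexity e m <= r * m.

Lemma in_nbhd u v : (u \in nbhd e v) = e v u.
Proof. by rewrite /nbhd inE. Qed.

Lemma trace_bound (A : {set T}) : 0 < #|A| -> #|[set nbhd e v :&: A | v : T]| <= r * #|A|.
Proof.
move=> hA; apply: leq_trans (heta hA).
rewrite /nbhd_complexity; exact: (@leq_bigmax_cond _ (fun B : {set T} => #|B| == #|A|) (fun B : {set T} => #|[set nbhd e v :&: B | v : T]|) A (eqxx _)).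
Qed.

Definition dd := r + 3.
Definition DD := 16 * r * r * dd.
Definition Dbound := DD + 4 * r.

Lemma card_pair (A : {set T}) a b : a != b ->
  #|A :&: [set a; b]| = (a \in A) + (b \in A).
Proof.
move=> ab.
case aA: (a \in A); case bA: (b \in A).
- have -> : A :&: [set a; b] = [set a; b].
    by apply/setIidPr/subsetP=> z; rewrite !inE => /orP[]/eqP ->.
  by rewrite cards2 ab.
- have -> : A :&: [set a; b] = [set a].
    apply/setP=> z; rewrite !inE; case: (eqVneq z a) => [->|za]; first by rewrite aA.
    by case: (eqVneq z b) => [->|]; rewrite ?bA ?andbF.
  by rewrite cards1.
- have -> : A :&: [set a; b] = [set b].
    apply/setP=> z; rewrite !inE; case: (eqVneq z b) => [->|zb]; first by rewrite bA orbT.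
    by case: (eqVneq z a) => [->|]; rewrite ?aA ?andbF.
  by rewrite cards1.
- have -> : A :&: [set a; b] = set0.
    apply/setP=> z; rewrite !inE; case: (eqVneq z b) => [->|zb]; first by rewrite bA.
    by case: (eqVneq z a) => [->|]; rewrite ?aA ?andbF.
  by rewrite cards0.
Qed.

Lemma key_lemma (U : {set T}) : U != set0 -> {in U &, injective (nbhd e)} ->
  (forall v, v \in U -> nbhd e v != set0) ->
  exists S : {set T}, 0 < #|[set v in U | odd #|nbhd e v :&: S|]| <= Dbound.
Proof.
move=> U0 Uinj Une.
case/set0Pn: U0 => v0 v0U.
have Upos : 0 < #|U| by apply/card_gt0P; exists v0.
set F := [set nbhd e a :&: U | a : T].
have trF : forall I : {set T}, I \subset U -> [set X :&: I | X in F] = [set nbhd e a :&: I | a : T].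
  move=> I IU; apply/setP=> Y; apply/imsetP/imsetP.
  - case=> X /imsetP [a _ ->] ->; exists a => //; by rewrite -setIA (setIidPr IU).
  - case=> a _ ->; exists (nbhd e a :&: U); first by apply/imsetP; exists a.
    by rewrite -setIA (setIidPr IU).
have rpos : 0 < r.
  have h1 : 0 < #|[set nbhd e v :&: U | v : T]|.
    by apply/card_gt0P; exists (nbhd e v0 :&: U); apply/imsetP; exists v0.
  have := leq_trans h1 (trace_bound Upos); rewrite muln_gt0; by case/andP.
have oddpair : forall a b, a != b -> forall v, v \in U ->
    odd #|nbhd e v :&: [set a; b]| = ((v \in nbhd e a) != (v \in nbhd e b)).
  move=> a b ab v vU; rewrite card_pair // !in_nbhd (esym a v) (esym b v).
  by case: (e v a); case: (e v b).
case: (boolP [exists a : T, exists b : T,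
   (nbhd e a :&: U != nbhd e b :&: U) &&
   (#|(nbhd e a :&: U) :\: (nbhd e b :&: U)| + #|(nbhd e b :&: U) :\: (nbhd e a :&: U)| < DD)]).
- case/existsP=> a /existsP [b /andP [ne hlt]].
  have ab : a != b by apply/eqP=> E; move: ne; rewrite E eqxx.
  exists [set a; b].
  set Xa := nbhd e a :&: U; set Xb := nbhd e b :&: U.
  have -> : [set v in U | odd #|nbhd e v :&: [set a; b]|] = (Xa :\: Xb) :|: (Xb :\: Xa).
    apply/setP=> v; rewrite inE; case vU: (v \in U) => /=; last by rewrite !inE vU !andbF.
    rewrite oddpair // !inE vU !andbT; by case: (e a v); case: (e b v).
  have hI : (Xa :\: Xb) :&: (Xb :\: Xa) = set0.
    apply/setP=> z; rewrite !inE; by case: (e a z); case: (e b z); case: (z \in U).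
  rewrite cardsU hI cards0 subn0; apply/andP; split.
  + rewrite addn_gt0; apply/orP.
    case: (eqVneq (Xa :\: Xb) set0) => [E|/set0Pn [z zX]]; last by left; apply/card_gt0P; exists z.
    right; apply/card_gt0P.
    case: (eqVneq (Xb :\: Xa) set0) => [E'|/set0Pn [z zX]]; last by exists z.
    have EXab : Xa = Xb.
      apply/setP=> z; move/setP: E => /(_ z); move/setP: E' => /(_ z); rewrite !inE.
      by case: (e a z); case: (e b z); case: (z \in U).
    by move: ne; rewrite -/Xa -/Xb EXab eqxx.
  + apply: leq_trans (ltnW hlt) _; exact: leq_addr.
- rewrite negb_exists => /forallP hall.
  have hD : forall X Z : {set T}, X \in F -> Z \in F -> X != Z -> DD <= #|X :\: Z| + #|Z :\: X|.
    move=> X Z /imsetP [a _ ->] /imsetP [b _ ->] ne.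
    move: (hall a); rewrite negb_exists => /forallP /(_ b); rewrite negb_and ne /=.
    by rewrite -leqNgt.
  have hB : forall X : {set T}, X \in F -> X \subset U.
    by move=> X /imsetP [a _ ->]; exact: subsetIr.
  have htr : forall I : {set T}, I \subset U -> #|[set X :&: I | X in F]| <= r * #|I| + 1.
    move=> I IU; rewrite trF //.
    case: (posnP #|I|) => [I0|Ip]; last by apply: leq_trans (trace_bound Ip) _; exact: leq_addr.
    move/eqP: I0; rewrite cards_eq0 => /eqP ->; rewrite cards0 muln0 add0n.
    apply: leq_trans (_ : #|[set (set0 : {set T})]| <= 1); last by rewrite cards1.
    apply: subset_leq_card; apply/subsetP=> Y /imsetP [a _ ->]; by rewrite setI0 inE.
  have hsh : forall J : {set T}, shatters F J -> #|J| <= dd.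
    move=> J sh.
    have JU : J \subset U.
      case: (sh J (subxx J)) => X XF E; apply/subsetP=> z zJ.
      have : z \in X :&: J by rewrite E.
      rewrite inE => /andP [zX _]; by move/subsetP: (hB X XF) => /(_ z zX).
    have : 2 ^ #|J| <= r * #|J| + 1.
      rewrite -card_powerset; apply: leq_trans (htr J JU).
      apply: subset_leq_card; apply/subsetP=> K; rewrite inE => KJ.
      case: (sh K KJ) => X XF E; apply/imsetP; by exists X.
    exact: pow_bound.
  set m := #|U|.
  set s := (4 * dd * m) %/ DD.
  have dpos : 0 < dd by rewrite /dd addn3.
  have hs : s <= m.
    have h1 : s * DD <= 4 * dd * m by rewrite /s leq_divM.
    have h2 : 4 * dd <= DD.
      rewrite /DD; apply: leq_mul => //; rewrite -mulnA; apply: leq_trans (_ : 4 <= 16 * 1) _ => //.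
      by rewrite leq_mul2l muln_gt0 rpos.
    have : s * (4 * dd) <= m * (4 * dd).
      apply: leq_trans (_ : s * DD <= _); first by rewrite leq_mul2l h2 orbT.
      by apply: leq_trans h1 _; rewrite mulnC.
    by rewrite leq_pmul2r // muln_gt0.
  have hpack := packing hB htr hsh hD hs.
  have hmf : m <= r * #|F|.
    pose rep X := odflt v0 [pick a | nbhd e a :&: U == X].
    have repP : forall X, X \in F -> nbhd e (rep X) :&: U = X.
      move=> X /imsetP [a _ ->]; rewrite /rep; case: pickP => [b /eqP //|h].
      by move: (h a); rewrite eqxx.
    set A := [set rep X | X in F].
    have cA : #|A| = #|F|.
      apply: card_in_imset => X Y XF YF E; by rewrite -(repP X XF) -(repP Y YF) E.
    have Apos : 0 < #|A|.
      rewrite cA; apply/card_gt0P; exists (nbhd e v0 :&: U); apply/imsetP; by exists v0.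
    have key1 : forall v a, v \in U ->
        e v a = (rep (nbhd e a :&: U) \in nbhd e v :&: A).
      move=> v a vU.
      have XF : nbhd e a :&: U \in F by apply/imsetP; exists a.
      have aA : rep (nbhd e a :&: U) \in A by apply/imsetP; exists (nbhd e a :&: U).
      rewrite inE aA andbT in_nbhd esym.
      have := repP _ XF; move/setP => /(_ v); rewrite !inE vU !andbT => <-.
      by rewrite esym.
    have inj : {in U &, injective (fun v => nbhd e v :&: A)}.
      move=> v w vU wU /= E; apply: Uinj => //; apply/setP=> a.
      by rewrite !in_nbhd (key1 v a vU) (key1 w a wU) E.
    rewrite /m -(card_in_imset inj) -cA.
    apply: leq_trans (trace_bound Apos).
    apply: subset_leq_card; apply/subsetP=> Y /imsetP [v _ ->]; apply/imsetP; by exists v.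
  have hm4 : m <= 4 * r.
    apply: (@arith r dd m #|F|) => //; move: hpack; by rewrite /s /DD.
  have : v0 \in U by [].
  case/set0Pn: (Une v0 v0U) => a; rewrite in_nbhd => ev0a.
  exists [set a]; apply/andP; split.
  + apply/card_gt0P; exists v0; rewrite !inE v0U /=.
    have -> : nbhd e v0 :&: [set a] = [set a].
      by apply/setIidPr; rewrite sub1set in_nbhd.
    by rewrite cards1.
  + apply: leq_trans (_ : m <= _); first by apply: subset_leq_card; apply/subsetP=> z; rewrite inE => /andP[].
    apply: leq_trans hm4 _; exact: leq_addl.
Qed.

End Graph.

From mathcomp Require Import all_algebra.
Import GRing.Theory.

Lemma z2add (x : 'Z_2) : (x + x = 0)%R.
Proof. have h : ((2%:R)%R : 'Z_2) = 0%R by apply/val_inj. by rewrite -mulr2n -mulr_natr h mulr0. Qed.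
Lemma v2add j (x : 'rV['Z_2]_j) : (x + x = 0)%R.
Proof. apply/rowP => i; rewrite !mxE; exact: z2add. Qed.
Lemma card_v j : #|{: 'rV['Z_2]_j}| = 2 ^ j.
Proof. by rewrite card_mx card_ord mul1n. Qed.

Lemma mulrn_odd j (a : 'rV['Z_2]_j) k : (a *+ k = a *+ odd k)%R.
Proof.
elim: k => // k IH; rewrite mulrS IH /=; case: (odd k) => /=.
- by rewrite v2add.
- by rewrite addr0.
Qed.

Section Main.
Variable T : finType.
Variable e : rel T.
Hypothesis esym : symmetric e.
Variable r : nat.
Hypothesis heta : forall m, 0 < m -> nbhd_complexity e m <= r * m.
Variable j : nat.
Hypothesis hj : Dbound r < 2 ^ j.

Lemma main_ind n : forall U : {set T}, #|U| <= n -> {in U &, injective (nbhd e)} ->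
  (forall v, v \in U -> nbhd e v != set0) ->
  exists l : T -> 'rV['Z_2]_j, forall v, v \in U -> (\sum_(u in nbhd e v) l u != 0)%R.
Proof.
elim: n => [|n IH] U hU Uinj Une.
  exists (fun _ => 0%R) => v vU.
  by move: hU; rewrite leqn0 cards_eq0 => /eqP UE; rewrite UE inE in vU.
case: (eqVneq U set0) => [->|U0].
  by exists (fun _ => 0%R) => v; rewrite inE.
case: (key_lemma esym heta U0 Uinj Une) => S /andP [Xpos Xle].
set X := [set v in U | odd #|nbhd e v :&: S|] in Xpos Xle *.
set U' := U :\: X.
have XU : X \subset U by apply/subsetP=> v; rewrite inE => /andP[].
have hU' : #|U'| <= n.
  have := cardsD U X; rewrite (setIidPr XU) -/U' => ->.
  move: hU Xpos; lia.
have Uinj' : {in U' &, injective (nbhd e)}.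
  by move=> v w; rewrite !inE => /andP[_ vU] /andP[_ wU]; apply: Uinj.
have Une' : forall v, v \in U' -> nbhd e v != set0.
  by move=> v; rewrite inE => /andP[_ vU]; apply: Une.
case: (IH U' hU' Uinj' Une') => l' hl'.
set Fb := [set (\sum_(u in nbhd e v) l' u)%R | v in X].
have : 0 < #|~: Fb|.
  have := cardsC Fb; rewrite card_v.
  have : #|Fb| <= #|X| by exact: leq_imset_card.
  move: Xle hj; lia.
case/card_gt0P=> a; rewrite inE => aF.
exists (fun u => l' u + a *+ (u \in S))%R => v vU.
have Hs : (\sum_(u in nbhd e v) (l' u + a *+ (u \in S)) =
          \sum_(u in nbhd e v) l' u + a *+ odd #|nbhd e v :&: S|)%R.
  rewrite big_split /= sumrMnr mulrn_odd; congr (_ + _ *+ odd _)%R.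
  rewrite -card_sub_sum; apply: eq_card => u; rewrite !inE //.
rewrite Hs.
case vX: (v \in X).
- have hodd : odd #|nbhd e v :&: S| by move: vX; rewrite inE vU.
  rewrite hodd mulr1n.
  apply/eqP=> E; move: aF => /negP; apply.
  apply/imsetP; exists v => //; symmetry.
  have : ((\sum_(u in nbhd e v) l' u + a) + a = a)%R by rewrite E add0r.
  by rewrite -addrA v2add addr0.
- have vU' : v \in U' by rewrite inE vX vU.
  move: vX; rewrite inE vU /= => /negbT /negbTE ->; rewrite mulr0n addr0.
  exact: hl'.
Qed.

End Main.


Theorem theorem1p2 :
  forall r : nat, exists k : nat,
  forall (T : finType) (e : rel T),
    symmetric e -> irreflexive e ->
    (forall m : nat, 0 < m -> nbhd_complexity e m <= r * m) ->
    exists c : T -> 'I_k,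
      forall v : T, nbhd e v != set0 ->
        exists i : 'I_k, odd #|[set u in nbhd e v | c u == i]|.
Proof.
move=> r.
exists #|{: 'rV['Z_2]_(Dbound r)}|.
move=> T e esym _ heta.
have hj : Dbound r < 2 ^ (Dbound r) by apply: ltn_expl.
pose repN v := odflt v [pick u | nbhd e u == nbhd e v].
have repP : forall v, nbhd e (repN v) = nbhd e v.
  move=> v; rewrite /repN; case: pickP => [u /eqP //|h].
  by move: (h v); rewrite eqxx.
have repE : forall v w, nbhd e v = nbhd e w -> repN v = repN w.
  move=> v w E; rewrite /repN (@eq_pick _ _ (fun u => nbhd e u == nbhd e w)); last first.
    by move=> u /=; rewrite E.
  case: pickP => // h; by move: (h w); rewrite eqxx.
set U0 := [set repN v | v in [set v | nbhd e v != set0]].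
have Uinj : {in U0 &, injective (nbhd e)}.
  move=> u1 u2 /imsetP [v1 _ ->] /imsetP [v2 _ ->]; rewrite !repP => E.
  exact: repE.
have Une : forall u, u \in U0 -> nbhd e u != set0.
  by move=> u /imsetP [v]; rewrite inE => vn ->; rewrite repP.
case: (main_ind esym heta hj (leqnn #|U0|) Uinj Une) => l hl.
exists (fun u => enum_rank (l u)) => v vn.
have vU : repN v \in U0 by apply/imsetP; exists v; rewrite // inE.
have := hl _ vU; rewrite repP => hs.
case: (boolP [exists i, odd #|[set u in nbhd e v | enum_rank (l u) == i]|]).
  by case/existsP=> i hi; exists i.
rewrite negb_exists => /forallP hall.
exfalso; move/negP: hs; apply.
rewrite (partition_big l xpredT) //=.
apply/eqP; apply: big1 => w _.
have -> : (\sum_(u in nbhd e v | l u == w) l u = \sum_(u in nbhd e v | l u == w) w)%R.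
  by apply: eq_bigr => u /andP [_ /eqP ->].
rewrite (eq_bigl (fun u => u \in [set u in nbhd e v | l u == w])); last first.
  by move=> u; rewrite inE.
rewrite sumr_const mulrn_odd.
have -> : #|[set u in nbhd e v | l u == w]| =
          #|[set u in nbhd e v | enum_rank (l u) == enum_rank w]|.
  by apply: eq_card => u; rewrite !inE (inj_eq enum_rank_inj).
by rewrite (negbTE (hall (enum_rank w))).
Qed.
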